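(* Let $(\mathfrak M,w)=(W,R,V,w)$ be a pointed model, and let $Unr_w(\mathfrak M)=(W',R',V')$ and $Unr^{re}_w(\mathfrak M)=(W',R^*,V')$ be its unravelling and reflexive unravelling from $w$. Then: (1) for every $\varphi\in Form$ and $(s_0,\dots,s_n)\in W'$: $Unr_w(\mathfrak M),(s_0,\dots,s_n)\models\varphi$ iff $\mathfrak M,s_n\models\varphi$; (2) if $R$ is reflexive, then for every $\varphi\in Form$ and $(s_0,\dots,s_n)\in W'$: $Unr^{re}_w(\mathfrak M),(s_0,\dots,s_n)\models\varphi$ iff $\mathfrak M,s_n\models\varphi$; (3) if $\mathfrak M\in\mathcal D_{P-}$, then $Unr_w(\mathfrak M)$ is an interpretation; (4) if $R$ is reflexive, then $Unr^{re}_w(\mathfrak M)$ is an interpretation with reflexive relation.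
   Context: $Form$: $\varphi::=p\mid\bot\mid(\varphi\wedge\varphi)\mid(\varphi\to\varphi)$ over a countable set $P0$. A model is $(W,R,V)$ with $W\neq\emptyset$, $R\subseteq W\times W$, $V:P0\to\wp(W)$. Satisfaction: $\bot$ never true; $p$ true at $s$ iff $s\in V(p)$; $\wedge$ pointwise; $\mathfrak M,s\models\varphi\to\psi$ iff for all $t$ with $sRt$, $\mathfrak M,t\models\varphi$ implies $\mathfrak M,t\models\psi$. For $X\subseteq W$: $-X=W\setminus X$, $R[X]=\{t:\exists s\in X,\ sRt\}$, $R^\Box(X)=\{s:\forall t\,(sRt\Rightarrow t\in X)\}$. A proposition of $(W,R)$ is $X\subseteq W$ with $R[X]\cap R^\Box(R[X])\subseteq X$; an interpretation is a model with every $V(p)$ a proposition. $\mathcal D_{P-}$ is the class of models with $V(p)\subseteq R^\Box(-R^\Box(\emptyset)\cup V(p))$ for all $p\in P0$. Unravelling: $W'$ is the set of finite sequences $(s_0,\dots,s_n)$, $n\in\mathbb N$, of elements of $W$ with $s_0=w$ and $s_iRs_{i+1}$ for $0\le i<n$; $(s_0,\dots,s_n)R'(t_0,\dots,t_m)$ iff $m=n+1$ and $(t_0,\dots,t_n)=(s_0,\dots,s_n)$; $V'(p)=\{(s_0,\dots,s_n)\in W':s_n\in V(p)\}$. $R^*$ is the reflexive closure of $R'$. *)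

(* Defs.v *)
From Stdlib Require Import List.
Import ListNotations.
Set Implicit Arguments.

Inductive form : Type :=
| Var : nat -> form
| Bot : form
| And : form -> form -> form
| Imp : form -> form -> form.

(* Satisfaction in a model (W,R,V); W nonempty is ensured by the point w. *)
Fixpoint sat (W : Type) (R : W -> W -> Prop) (V : nat -> W -> Prop)
  (s : W) (phi : form) : Prop :=
  match phi with
  | Var p => V p s
  | Bot => False
  | And a b => sat R V s a /\ sat R V s b
  | Imp a b => forall t, R s t -> sat R V t a -> sat R V t b
  end.

Definition setC (W : Type) (X : W -> Prop) : W -> Prop := fun s => ~ X s.
Definition setU (W : Type) (X Y : W -> Prop) : W -> Prop := fun s => X s \/ Y s.
Definition setI (W : Type) (X Y : W -> Prop) : W -> Prop := fun s => X s /\ Y s.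
Definition set0 (W : Type) : W -> Prop := fun _ => False.
Definition subset (W : Type) (X Y : W -> Prop) : Prop := forall s, X s -> Y s.

Definition Rimg (W : Type) (R : W -> W -> Prop) (X : W -> Prop) : W -> Prop :=
  fun t => exists s, X s /\ R s t.
Definition Rbox (W : Type) (R : W -> W -> Prop) (X : W -> Prop) : W -> Prop :=
  fun s => forall t, R s t -> X t.

Definition is_proposition (W : Type) (R : W -> W -> Prop) (X : W -> Prop) : Prop :=
  subset (setI (Rimg R X) (Rbox R (Rimg R X))) X.

Definition interpretation (W : Type) (R : W -> W -> Prop) (V : nat -> W -> Prop) : Prop :=
  forall p, is_proposition R (V p).

Definition in_DPminus (W : Type) (R : W -> W -> Prop) (V : nat -> W -> Prop) : Prop :=
  forall p, subset (V p) (Rbox R (setU (setC (Rbox R (@set0 W))) (V p))).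

Definition reflexive (W : Type) (R : W -> W -> Prop) : Prop := forall s, R s s.

Fixpoint chain (W : Type) (R : W -> W -> Prop) (l : list W) : Prop :=
  match l with
  | [] => True
  | x :: l' => match l' with
               | [] => True
               | y :: _ => R x y /\ chain R l'
               end
  end.

Definition is_unr_point (W : Type) (R : W -> W -> Prop) (w : W) (l : list W) : Prop :=
  (exists l', l = w :: l') /\ chain R l.

Definition UnrW (W : Type) (R : W -> W -> Prop) (w : W) : Type :=
  { l : list W | is_unr_point R w l }.

Definition lastel (W : Type) (R : W -> W -> Prop) (w : W) (s : UnrW R w) : W :=
  last (proj1_sig s) w.

Definition UnrR (W : Type) (R : W -> W -> Prop) (w : W) (s t : UnrW R w) : Prop :=
  length (proj1_sig t) = S (length (proj1_sig s)) /\
  firstn (length (proj1_sig s)) (proj1_sig t) = proj1_sig s.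

Definition UnrV (W : Type) (R : W -> W -> Prop) (V : nat -> W -> Prop) (w : W)
  (p : nat) (s : UnrW R w) : Prop := V p (lastel s).

Definition UnrRre (W : Type) (R : W -> W -> Prop) (w : W) (s t : UnrW R w) : Prop :=
  UnrR s t \/ s = t.

(* Main.v *)
Require Import Defs.
From Stdlib Require Import List Classical Lia Arith.
Import ListNotations.

Lemma chain_app (W : Type) (R : W -> W -> Prop) (w t : W) :
  forall l x, chain R (x :: l) -> R (last (x :: l) w) t -> chain R (x :: l ++ [t]).
Proof.
  induction l as [|y l IH]; intros x Hc Hr; simpl in *.
  - split; auto.
  - destruct Hc as [Hxy Hc]. split; auto.
    apply (IH y Hc). destruct l; simpl in *; auto.
Qed.

Lemma chain_app_inv (W : Type) (R : W -> W -> Prop) (w t : W) :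
  forall l x, chain R (x :: l ++ [t]) -> R (last (x :: l) w) t.
Proof.
  induction l as [|y l IH]; intros x Hc; simpl in *.
  - tauto.
  - destruct Hc as [_ Hc]. specialize (IH y Hc). destruct l; simpl in *; auto.
Qed.

Lemma split_last (W : Type) (l l' : list W) :
  length l' = S (length l) -> firstn (length l) l' = l -> exists u, l' = l ++ [u].
Proof.
  intros Hl Hf. rewrite <- (firstn_skipn (length l) l'). rewrite Hf.
  assert (length (skipn (length l) l') = 1) by (rewrite length_skipn; lia).
  destruct (skipn (length l) l') as [|u [|]]; simpl in H; try discriminate.
  eauto.
Qed.

Definition ext (W : Type) (R : W -> W -> Prop) (w : W) (s : UnrW R w) (t : W)
  (H : R (lastel s) t) : UnrW R w.
Proof.
  exists (proj1_sig s ++ [t]).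
  destruct s as [l [[l' E] Hc]]. simpl in *. subst l. split.
  - exists (l' ++ [t]). reflexivity.
  - apply chain_app with w; auto.
Defined.

Lemma ext_R (W : Type) (R : W -> W -> Prop) (w : W) (s : UnrW R w) t H :
  UnrR s (@ext W R w s t H).
Proof.
  unfold UnrR, ext. simpl. rewrite length_app. simpl. split; [lia|].
  rewrite firstn_app, firstn_all, Nat.sub_diag. simpl. apply app_nil_r.
Qed.

Lemma ext_last (W : Type) (R : W -> W -> Prop) (w : W) (s : UnrW R w) t H :
  lastel (@ext W R w s t H) = t.
Proof. unfold lastel, ext. simpl. apply last_last. Qed.

Lemma UnrR_R (W : Type) (R : W -> W -> Prop) (w : W) (s s' : UnrW R w) :
  UnrR s s' -> R (lastel s) (lastel s').
Proof.
  destruct s' as [l' [Hw Hc]]. destruct s as [l [[l0 E0] Hc0]].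
  unfold UnrR, lastel. simpl. intros [Hl Hf].
  destruct (split_last _ _ _ Hl Hf) as [u E]. subst l l'.
  rewrite last_last. apply chain_app_inv. exact Hc.
Qed.

Lemma UnrR_pred (W : Type) (R : W -> W -> Prop) (w : W) (x t t' : UnrW R w) :
  UnrR t t' -> UnrR x t' -> proj1_sig x = proj1_sig t.
Proof.
  intros [H1 H2] [H3 H4].
  assert (length (proj1_sig x) = length (proj1_sig t)) by lia.
  rewrite <- H4, <- H2, H. reflexivity.
Qed.

Theorem mainTheorem15 (W : Type) (R : W -> W -> Prop) (V : nat -> W -> Prop) (w : W) :
  (forall (phi : form) (s : UnrW R w),
      sat (@UnrR W R w) (UnrV V (w:=w)) s phi <-> sat R V (lastel s) phi) /\
  (reflexive R ->
   forall (phi : form) (s : UnrW R w),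
      sat (@UnrRre W R w) (UnrV V (w:=w)) s phi <-> sat R V (lastel s) phi) /\
  (in_DPminus R V -> interpretation (@UnrR W R w) (UnrV V (w:=w))) /\
  (reflexive R ->
   interpretation (@UnrRre W R w) (UnrV V (w:=w)) /\ reflexive (@UnrRre W R w)).
Proof.
  split; [|split; [|split]].
  - induction phi as [p| |a IHa b IHb|a IHa b IHb]; intro s; simpl.
    + unfold UnrV. tauto.
    + tauto.
    + rewrite IHa, IHb. tauto.
    + split.
      * intros H t Ht Hat. rewrite <- (@ext_last _ _ _ s t Ht).
        apply IHb. apply H. apply ext_R. apply IHa. rewrite ext_last. exact Hat.
      * intros H s' Hs' Ha. apply IHb. apply H. apply UnrR_R; auto. apply IHa; auto.
  - intros Hrefl. induction phi as [p| |a IHa b IHb|a IHa b IHb]; intro s; simpl.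
    + unfold UnrV. tauto.
    + tauto.
    + rewrite IHa, IHb. tauto.
    + split.
      * intros H t Ht Hat. rewrite <- (@ext_last _ _ _ s t Ht).
        apply IHb. apply H. left. apply ext_R. apply IHa. rewrite ext_last. exact Hat.
      * intros H s' Hs' Ha. apply IHb. apply H.
        -- destruct Hs' as [Hs'|<-]. apply UnrR_R; auto. apply Hrefl.
        -- apply IHa; auto.
  - intros HD p t [[x [Hx Hxt]] Hbox]. unfold UnrV in *.
    pose proof (HD p _ Hx _ (@UnrR_R _ _ _ _ _ Hxt)) as [Hn|Hv]; [|exact Hv].
    apply NNPP. intro Hnv. apply Hn. intros u Hu.
    destruct (Hbox _ (@ext_R _ _ _ t u Hu)) as [y [Hy Hyt]].
    apply Hnv. unfold lastel in *. rewrite <- (@UnrR_pred _ _ _ _ _ _ (@ext_R _ _ _ t u Hu) Hyt). exact Hy.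
  - intros Hrefl. split.
    + intros p t [[x [Hx Hxt]] Hbox]. unfold UnrV in *.
      destruct Hxt as [Hxt| <-]; [|exact Hx].
      assert (Hu : R (lastel t) (lastel t)) by apply Hrefl.
      destruct (Hbox _ (or_introl (@ext_R _ _ _ t _ Hu))) as [y [Hy [Hyt| E]]].
      * unfold lastel in *. rewrite <- (@UnrR_pred _ _ _ _ _ _ (@ext_R _ _ _ t _ Hu) Hyt). exact Hy.
      * subst y. rewrite ext_last in Hy. exact Hy.
    + intro s. right. reflexivity.
Qed.
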